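(* With $Z,G,B,Y$ and $q_{00}=e^{-(1-q)\mu}$ as below, define $\theta_1=\mathbb E[Y]$, $\theta_2=q_{00}\,\mathbb E[Y\mid Z\le G]/\theta_1$ and $\theta_3=\mathrm{Var}[Y]/\theta_1^2-1/\theta_1$. Then $$\theta_1=\frac{p}{1-p}\,\frac{q}{1-q}\,(1-q_{00}),\qquad \theta_2=-\frac{q_{00}\log q_{00}}{1-q_{00}},\qquad \theta_3=\frac{2}{1-q_{00}}\Big(\frac{1-q}{q}-\theta_2+1\Big)-1.$$
   Context: Let $\mu>0$, $0<q<1$, $0<p<1$. Let $Z\sim\mathrm{Poisson}(\mu)$ and $G$ with $\mathbb P(G=k)=q^k(1-q)$ ($k\in\mathbb N_0$) be independent, $B=\min(Z,G)$, and, conditionally on $B$ (and on $Z,G$), let $Y=\sum_{i=1}^BW_i$ with $W_i$ i.i.d., $\mathbb P(W_i=k)=p^k(1-p)$, $k\in\mathbb N_0$. Here $Y$ models the photons emitted in one exposure by an initially bright Alexa 647 fluorophore, and $\{Z\le G\}$ is the event that it stays bright. *)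

(* Defs.v *)
From Stdlib Require Import Arith Factorial Reals Lra.
Open Scope R_scope.

Definition pois (mu : R) (z : nat) : R := exp (- mu) * mu ^ z / INR (fact z).

Definition geom (q : R) (k : nat) : R := q ^ k * (1 - q).

(* pmf of W_1 + ... + W_b, W_i i.i.d. geom p : b-fold convolution *)
Fixpoint sum_pmf (p : R) (b : nat) (k : nat) : R :=
  match b with
  | O => if Nat.eqb k 0 then 1 else 0
  | S b' => sum_f_R0 (fun j => geom p j * sum_pmf p b' (k - j)%nat) k
  end.

(* joint pmf P(Z = z, G = g, Y = y), with B = min Z G *)
Definition joint (mu q p : R) (z g y : nat) : R :=
  pois mu z * geom q g * sum_pmf p (Nat.min z g) y.

(* Nested (absolutely convergent, for nonneg terms) triple series sum over
   (z, g, y) in N^3 *)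
Definition HasSum3 (F : nat -> nat -> nat -> R) (l : R) : Prop :=
  exists (b : nat -> nat -> R) (a : nat -> R),
    (forall z g, infinite_sum (fun y => F z g y) (b z g)) /\
    (forall z, infinite_sum (fun g => b z g) (a z)) /\
    infinite_sum a l.

Definition ind_le (z g : nat) : R := if Nat.leb z g then 1 else 0.

(* Main.v *)
Require Import Defs.
From Stdlib Require Import Reals Lra Lia Factorial.
From Coquelicot Require Import Coquelicot.
Open Scope R_scope.

Lemma isR_scal (c:R) (a : nat -> R) l : is_series a l -> is_series (fun n => c * a n) (c * l).
Proof. intro H. exact (is_series_scal c a l H). Qed.

Lemma isR_plus (a b : nat -> R) la lb : is_series a la -> is_series b lb ->
  is_series (fun n => a n + b n) (la + lb).
Proof. intros H1 H2. exact (is_series_plus a b la lb H1 H2). Qed.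

Lemma isR_ext (a b : nat -> R) (l l' : R) : (forall n, a n = b n) -> l = l' -> is_series a l -> is_series b l'.
Proof. intros H e H1; rewrite <- e; exact (is_series_ext a b l H H1). Qed.

Lemma isR_decr (a : nat -> R) n (l : R) : (0 < n)%nat -> is_series (fun k => a (n+k)%nat) l ->
  is_series a (l + sum_f_R0 a (pred n)).
Proof.
  intros Hn H. apply is_series_decr_n with n; auto.
  rewrite sum_n_Reals.
  assert (E : plus (l + sum_f_R0 a (pred n)) (opp (sum_f_R0 a (pred n))) = l).
  { unfold plus, opp; simpl. ring. }
  match goal with |- is_series _ ?x => replace x with l end. exact H.
Qed.

Lemma isR_abs (a : nat -> R) l : (forall n, 0 <= a n) -> is_series a l -> ex_series (fun n => Rabs (a n)).
Proof. intros Hp H. exists l. apply (is_series_ext a); auto.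
  intro n; rewrite Rabs_pos_eq; auto. Qed.

Definition conv (a b : nat -> R) n := sum_f_R0 (fun k => a k * b (n - k)%nat) n.

Lemma conv_series a b la lb : (forall n, 0 <= a n) -> (forall n, 0 <= b n) ->
  is_series a la -> is_series b lb -> is_series (conv a b) (la * lb).
Proof. intros. apply is_series_mult; auto; eapply isR_abs; eauto. Qed.

Lemma conv_nonneg a b n : (forall n, 0 <= a n) -> (forall n, 0 <= b n) -> 0 <= conv a b n.
Proof. intros. unfold conv. apply cond_pos_sum. intro; apply Rmult_le_pos; auto. Qed.

Lemma conv_mom1 a b n : INR n * conv a b n =
  conv (fun k => INR k * a k) b n + conv a (fun k => INR k * b k) n.
Proof.
  unfold conv. rewrite <- plus_sum, scal_sum. apply sum_eq. intros i Hi.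
  rewrite minus_INR by auto. ring.
Qed.

Lemma conv_mom2 a b n : INR n ^ 2 * conv a b n =
  conv (fun k => INR k ^ 2 * a k) b n + 2 * conv (fun k => INR k * a k) (fun k => INR k * b k) n
  + conv a (fun k => INR k ^ 2 * b k) n.
Proof.
  unfold conv. rewrite scal_sum, scal_sum, <- !plus_sum. apply sum_eq. intros i Hi.
  rewrite minus_INR by auto. ring.
Qed.

Lemma pow_nonneg x n : 0 <= x -> 0 <= x ^ n.
Proof. intro; apply pow_le; auto. Qed.

Lemma sum_Sk n : sum_f_R0 (fun k => INR (S k)) n = INR (S n) * INR (S (S n)) / 2.
Proof. induction n. simpl; field.
  rewrite tech5, IHn. rewrite !S_INR. field. Qed.

Section Geo.
Variable r : R.
Hypothesis r0 : 0 <= r.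
Hypothesis r1 : r < 1.

Lemma geo0 : is_series (fun n => r ^ n) (/ (1 - r)).
Proof. apply is_series_geom. rewrite Rabs_pos_eq; auto. Qed.

Lemma geo1 : is_series (fun n => INR (S n) * r ^ n) (/ (1 - r) * / (1 - r)).
Proof.
  eapply isR_ext; [|reflexivity|apply (conv_series (fun n => r^n) (fun n => r^n));
    auto using pow_nonneg, geo0].
  intro n; unfold conv. rewrite (sum_eq _ (fun _ => r ^ n)). rewrite sum_cte; ring.
  intros i Hi. rewrite <- pow_add. f_equal. lia.
Qed.

Lemma geo2 : is_series (fun n => INR (S n) * INR (S (S n)) / 2 * r ^ n)
   (/ (1 - r) * / (1 - r) * / (1 - r)).
Proof.
  eapply isR_ext; [|reflexivity|apply (conv_series (fun n => INR (S n) * r^n) (fun n => r^n));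
    auto using pow_nonneg, geo0, geo1].
  intro n; unfold conv. rewrite (sum_eq _ (fun k => INR (S k) * r ^ n)).
  rewrite <- scal_sum, sum_Sk. field.
  intros i Hi. rewrite Rmult_assoc, <- pow_add. do 2 f_equal. lia.
  intro n; apply Rmult_le_pos; auto using pos_INR, pow_nonneg.
Qed.

Lemma geom0 : is_series (geom r) 1.
Proof. eapply isR_ext; [ | | apply (isR_scal (1 - r)), geo0].
  intro n; unfold geom; ring. field. lra. Qed.

Lemma geom1 : is_series (fun n => INR n * geom r n) (r / (1 - r)).
Proof. eapply isR_ext; [ | | apply (isR_scal (1 - r)), isR_plus; [apply geo1|apply (isR_scal (-1)), geo0]].
  intro n; unfold geom; rewrite S_INR; ring. field. lra. Qed.

Lemma geom2 : is_series (fun n => INR n ^ 2 * geom r n) (r * (1 + r) / (1 - r) ^ 2).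
Proof. eapply isR_ext; [ | | apply (isR_scal (1 - r)), isR_plus; [apply isR_plus; [apply (isR_scal 2), geo2|apply (isR_scal (-3)), geo1]|apply geo0]].
  intro n; unfold geom; rewrite !S_INR; field. field. lra. Qed.

Lemma geom_nonneg n : 0 <= geom r n.
Proof. unfold geom. apply Rmult_le_pos; auto using pow_nonneg; lra. Qed.
End Geo.

Lemma zero_series : is_series (fun _ : nat => 0) 0.
Proof. eapply isR_ext; [ | | apply (isR_scal 0), (geom0 0); lra]; [intro; cbv beta; ring | ring]. Qed.

Section Pmf.
Variable p : R.
Hypothesis p0 : 0 < p.
Hypothesis p1 : p < 1.
Let m := p / (1 - p).
Let s := p / (1 - p) ^ 2.

Lemma pmf_S b n : sum_pmf p (S b) n = conv (geom p) (sum_pmf p b) n.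
Proof. reflexivity. Qed.

Lemma pmf_mom b : (forall k, 0 <= sum_pmf p b k) /\ is_series (sum_pmf p b) 1 /\
  is_series (fun k => INR k * sum_pmf p b k) (INR b * m) /\
  is_series (fun k => INR k ^ 2 * sum_pmf p b k) (INR b * s + (INR b * m) ^ 2).
Proof.
  assert (gn : forall k, 0 <= geom p k) by (apply geom_nonneg; lra).
  assert (g0 := geom0 p ltac:(lra) p1).
  assert (g1 := geom1 p ltac:(lra) p1).
  assert (g2 := geom2 p ltac:(lra) p1).
  assert (g1n : forall k, 0 <= INR k * geom p k) by (intro; apply Rmult_le_pos; auto using pos_INR).
  assert (g2n : forall k, 0 <= INR k ^ 2 * geom p k) by (intro; apply Rmult_le_pos; auto using pos_INR, pow_nonneg).
  induction b as [|b [Hn [H0 [H1 H2]]]].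
  - split; [|split; [|split]].
    + intro k; simpl; destruct (Nat.eqb k 0); lra.
    + eapply isR_ext; [ | | apply (isR_decr _ 1); [lia|] ]; [intro; reflexivity | | ].
      2:{ eapply isR_ext; [ | | apply zero_series]; [intro; reflexivity|reflexivity]. }
      simpl; ring.
    + eapply isR_ext; [ | | apply zero_series]; [ | simpl; ring].
      intro n; simpl; destruct n; simpl; ring.
    + eapply isR_ext; [ | | apply zero_series]; [ | simpl; ring].
      intro n; simpl; destruct n; simpl; ring.
  - assert (h1n : forall k, 0 <= INR k * sum_pmf p b k) by (intro; apply Rmult_le_pos; auto using pos_INR).
    assert (h2n : forall k, 0 <= INR k ^ 2 * sum_pmf p b k) by (intro; apply Rmult_le_pos; auto using pos_INR, pow_nonneg).
    split; [|split; [|split]].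
    + intro k; rewrite pmf_S; apply conv_nonneg; auto.
    + eapply isR_ext; [ | | apply (conv_series (geom p) (sum_pmf p b)); eauto ].
      intro n; rewrite pmf_S; reflexivity. ring.
    + eapply isR_ext; [ | | apply isR_plus; [apply (conv_series _ _ _ _ g1n Hn g1 H0) | apply (conv_series _ _ _ _ gn h1n g0 H1)]].
      intro n; rewrite pmf_S, conv_mom1; reflexivity.
      rewrite S_INR; unfold m; ring.
    + eapply isR_ext; [ | | apply isR_plus; [apply isR_plus; [apply (conv_series _ _ _ _ g2n Hn g2 H0) | apply isR_scal, (conv_series _ _ _ _ g1n h1n g1 H1)]| apply (conv_series _ _ _ _ gn h2n g0 H2)]].
      intro n; rewrite pmf_S, conv_mom2; reflexivity.
      rewrite S_INR; unfold m, s; field. lra.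
Qed.
End Pmf.

Fixpoint fs (h : nat -> R) (z : nat) : R :=
  match z with O => 0 | S z' => fs h z' + h z' end.

Lemma fs_sum h n : fs h (S n) = sum_f_R0 h n.
Proof. induction n. simpl; ring. rewrite tech5, <- IHn. reflexivity. Qed.

Section Gs.
Variable q : R.
Hypothesis q0 : 0 < q.
Hypothesis q1 : q < 1.

Lemma g_series (f : nat -> R) z :
  is_series (fun g => geom q g * f (Nat.min z g)) (q ^ z * f z + fs (fun g => geom q g * f g) z).
Proof.
  assert (g0 := geom0 q ltac:(lra) q1).
  destruct z as [|z].
  - eapply isR_ext; [ | | apply (isR_scal (f 0%nat)), g0 ]. intro; simpl; ring. simpl; ring.
  - eapply isR_ext; [ intro; reflexivity | | apply (isR_decr _ (S z)); [lia|] ].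
    2:{ eapply isR_ext; [ | reflexivity | apply (isR_scal (q ^ S z * f (S z))), g0 ].
        intro k. rewrite Nat.min_l by lia. unfold geom; rewrite pow_add; ring. }
    rewrite fs_sum. simpl pred. f_equal. ring. apply sum_eq. intros i Hi.
    rewrite Nat.min_r by lia. reflexivity.
Qed.

Lemma g_series_le (f : nat -> R) z :
  is_series (fun g => ind_le z g * (geom q g * f (Nat.min z g))) (q ^ z * f z).
Proof.
  assert (g0 := geom0 q ltac:(lra) q1).
  destruct z as [|z].
  - eapply isR_ext; [ | | apply (isR_scal (f 0%nat)), g0 ]. intro; unfold ind_le; simpl; ring. simpl; ring.
  - eapply isR_ext; [ intro; reflexivity | | apply (isR_decr _ (S z)); [lia|] ].
    2:{ eapply isR_ext; [ | reflexivity | apply (isR_scal (q ^ S z * f (S z))), g0 ].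
        intro k. unfold ind_le. rewrite (proj2 (Nat.leb_le _ _)) by lia.
        rewrite Nat.min_l by lia. unfold geom; rewrite pow_add; ring. }
    simpl pred. rewrite (sum_eq _ (fun _ => 0)). rewrite sum_cte. ring.
    intros i Hi. unfold ind_le. rewrite (proj2 (Nat.leb_gt _ _)) by lia. ring.
Qed.

Variable p : R.
Hypothesis p0 : 0 < p.
Hypothesis p1 : p < 1.
Let m := p / (1 - p).
Let s := p / (1 - p) ^ 2.

Lemma fs_S h n : fs h (S n) = fs h n + h n.
Proof. reflexivity. Qed.

Ltac cf_step IHz := rewrite fs_S; cbv beta; set (F := fs _ _) in *;
  match type of IHz with ?X + F = ?R => let E := fresh "E" in assert (E: F = R - X) by (rewrite <- IHz; ring); rewrite E end;
  unfold geom; rewrite S_INR; simpl pow; field; lra.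

Lemma CF1 z : q ^ z * (INR z * m) + fs (fun g => geom q g * (INR g * m)) z
  = m * q / (1 - q) + (- (m * q / (1 - q))) * q ^ z + 0 * (INR z * q ^ z).
Proof.
  induction z. simpl; field; lra. cf_step IHz.
Qed.

Definition A2 := s * q / (1 - q) + m ^ 2 * (2 * q / (1 - q) ^ 2 - q / (1 - q)).
Definition B2 := - (s * q / (1 - q)) + m ^ 2 * (q / (1 - q) - 2 * q / (1 - q) ^ 2).
Definition C2 := m ^ 2 * (- (2 * q / (1 - q))).

Lemma CF2 z : q ^ z * (INR z * s + (INR z * m) ^ 2) + fs (fun g => geom q g * (INR g * s + (INR g * m) ^ 2)) z
  = A2 + B2 * q ^ z + C2 * (INR z * q ^ z).
Proof.
  unfold A2, B2, C2.
  induction z. simpl; field; lra. cf_step IHz.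
Qed.
End Gs.

Lemma exp_ser x : is_series (fun n => x ^ n / INR (fact n)) (exp x).
Proof.
  assert (H := is_exp_Reals x). unfold is_pseries in H.
  eapply isR_ext; [ | reflexivity | exact H ]. intro n. rewrite pow_n_pow. reflexivity.
Qed.

Lemma exp_ser1 x : is_series (fun n => INR n * (x ^ n / INR (fact n))) (x * exp x).
Proof.
  eapply isR_ext; [ intro; reflexivity | | apply (isR_decr _ 1); [lia|] ].
  2:{ eapply isR_ext; [ | reflexivity | apply (isR_scal x), (exp_ser x) ].
      intro k. simpl plus. rewrite fact_simpl, mult_INR, !S_INR. simpl pow.
      assert (0 <= INR k) by apply pos_INR. assert (INR (fact k) <> 0) by apply INR_fact_neq_0.
      field. split; auto. lra. }
  simpl. ring.
Qed.

Lemma pois_ser mu q A B C :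
  is_series (fun z => pois mu z * (A + B * q ^ z + C * (INR z * q ^ z)))
    (A + B * (exp (- mu) * exp (q * mu)) + C * (q * mu * (exp (- mu) * exp (q * mu)))).
Proof.
  assert (Hee : exp (- mu) * exp mu = 1) by (rewrite <- exp_plus, Rplus_opp_l; apply exp_0).
  eapply isR_ext; [ | | apply (isR_scal (exp (- mu))), isR_plus; [apply isR_plus; [apply (isR_scal A), (exp_ser mu) | apply (isR_scal B), (exp_ser (q * mu))] | apply (isR_scal C), (exp_ser1 (q * mu))] ].
  intro n. unfold pois. rewrite Rpow_mult_distr.
  assert (INR (fact n) <> 0) by apply INR_fact_neq_0. field; auto.
  transitivity (A * (exp (- mu) * exp mu) + B * (exp (- mu) * exp (q * mu)) + C * (q * mu * (exp (- mu) * exp (q * mu)))).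
  ring. rewrite Hee; ring.
Qed.

Theorem mainTheorem11 (mu q p : R) (hmu : 0 < mu) (hq0 : 0 < q) (hq1 : q < 1)
  (hp0 : 0 < p) (hp1 : p < 1) :
  let q00 := exp (- ((1 - q) * mu)) in
  exists EY EY2 EYb Pb : R,
    HasSum3 (fun z g y => INR y * joint mu q p z g y) EY /\
    HasSum3 (fun z g y => INR y ^ 2 * joint mu q p z g y) EY2 /\
    HasSum3 (fun z g y => INR y * ind_le z g * joint mu q p z g y) EYb /\
    HasSum3 (fun z g y => ind_le z g * joint mu q p z g y) Pb /\
    let theta1 := EY in
    let theta2 := q00 * (EYb / Pb) / theta1 in
    let theta3 := (EY2 - EY ^ 2) / theta1 ^ 2 - 1 / theta1 in
    theta1 = p / (1 - p) * (q / (1 - q)) * (1 - q00) /\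
    theta2 = - (q00 * ln q00) / (1 - q00) /\
    theta3 = 2 / (1 - q00) * ((1 - q) / q - theta2 + 1) - 1.
Proof.
  intros q00.
  set (X := exp (- mu) * exp (q * mu)).
  assert (HX : q00 = X) by (unfold q00, X; rewrite <- exp_plus; f_equal; ring).
  set (m := p / (1 - p)).
  set (s := p / (1 - p) ^ 2).
  set (A1 := m * q / (1 - q)).
  exists (A1 + (- A1) * X + 0 * (q * mu * X)),
         (A2 q p + B2 q p * X + C2 q p * (q * mu * X)),
         (0 + 0 * X + m * (q * mu * X)),
         (0 + 1 * X + 0 * (q * mu * X)).
  split; [|split; [|split; [|split]]].
  - exists (fun z g => pois mu z * geom q g * (INR (Nat.min z g) * m)),
      (fun z => pois mu z * (q ^ z * (INR z * m) + fs (fun g => geom q g * (INR g * m)) z)).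
    split; [|split].
    + intros z g; apply is_series_Reals.
      destruct (pmf_mom p hp0 hp1 (Nat.min z g)) as [_ [_ [H1 _]]].
      eapply isR_ext; [ | | apply (isR_scal (pois mu z * geom q g)), H1 ].
      intro y; unfold joint; ring. reflexivity.
    + intro z; apply is_series_Reals.
      eapply isR_ext; [ | | apply (isR_scal (pois mu z)), (g_series q hq0 hq1 (fun b => INR b * m) z) ].
      intro g; cbv beta; ring. reflexivity.
    + apply is_series_Reals.
      eapply isR_ext; [ | | apply (pois_ser mu q A1 (- A1) 0) ].
      intro z. unfold m. rewrite (CF1 q hq1 p z). reflexivity. reflexivity.
  - exists (fun z g => pois mu z * geom q g * (INR (Nat.min z g) * s + (INR (Nat.min z g) * m) ^ 2)),
      (fun z => pois mu z * (q ^ z * (INR z * s + (INR z * m) ^ 2) + fs (fun g => geom q g * (INR g * s + (INR g * m) ^ 2)) z)).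
    split; [|split].
    + intros z g; apply is_series_Reals.
      destruct (pmf_mom p hp0 hp1 (Nat.min z g)) as [_ [_ [_ H2]]].
      eapply isR_ext; [ | | apply (isR_scal (pois mu z * geom q g)), H2 ].
      intro y; unfold joint; ring. reflexivity.
    + intro z; apply is_series_Reals.
      eapply isR_ext; [ | | apply (isR_scal (pois mu z)), (g_series q hq0 hq1 (fun b => INR b * s + (INR b * m) ^ 2) z) ].
      intro g; cbv beta; ring. reflexivity.
    + apply is_series_Reals.
      eapply isR_ext; [ | | apply (pois_ser mu q (A2 q p) (B2 q p) (C2 q p)) ].
      intro z. unfold m, s. rewrite (CF2 q hq1 p z). reflexivity. reflexivity.
  - exists (fun z g => ind_le z g * pois mu z * geom q g * (INR (Nat.min z g) * m)),
      (fun z => pois mu z * (q ^ z * (INR z * m))).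
    split; [|split].
    + intros z g; apply is_series_Reals.
      destruct (pmf_mom p hp0 hp1 (Nat.min z g)) as [_ [_ [H1 _]]].
      eapply isR_ext; [ | | apply (isR_scal (ind_le z g * pois mu z * geom q g)), H1 ].
      intro y; unfold joint; ring. reflexivity.
    + intro z; apply is_series_Reals.
      eapply isR_ext; [ | | apply (isR_scal (pois mu z)), (g_series_le q hq0 hq1 (fun b => INR b * m) z) ].
      intro g; cbv beta; ring. reflexivity.
    + apply is_series_Reals.
      eapply isR_ext; [ | | apply (pois_ser mu q 0 0 m) ].
      intro z. cbv beta; ring. reflexivity.
  - exists (fun z g => ind_le z g * pois mu z * geom q g * 1),
      (fun z => pois mu z * (q ^ z * 1)).
    split; [|split].
    + intros z g; apply is_series_Reals.
      destruct (pmf_mom p hp0 hp1 (Nat.min z g)) as [_ [H0 _]].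
      eapply isR_ext; [ | | apply (isR_scal (ind_le z g * pois mu z * geom q g)), H0 ].
      intro y; unfold joint; ring. reflexivity.
    + intro z; apply is_series_Reals.
      eapply isR_ext; [ | | apply (isR_scal (pois mu z)), (g_series_le q hq0 hq1 (fun b => 1) z) ].
      intro g; cbv beta; ring. reflexivity.
    + apply is_series_Reals.
      eapply isR_ext; [ | | apply (pois_ser mu q 0 1 0) ].
      intro z. cbv beta; ring. reflexivity.
  - intros theta1 theta2 theta3.
    assert (Xpos : 0 < X) by (rewrite <- HX; apply exp_pos).
    assert (Xlt : X < 1).
    { rewrite <- HX. unfold q00. assert (H := exp_increasing (- ((1 - q) * mu)) 0 ltac:(nra)). rewrite exp_0 in H. exact H. }
    assert (Hln : ln q00 = - ((1 - q) * mu)) by (unfold q00; apply ln_exp).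
    assert (m0 : 0 < m) by (unfold m; apply Rdiv_lt_0_compat; lra).
    assert (Ht2 : theta2 = - (q00 * ln q00) / (1 - q00)).
    { unfold theta2, theta1. rewrite Hln, HX. unfold A1. field. repeat split; try lra.
      assert (0 < m*q*(1-X)) by (apply Rmult_lt_0_compat; [nra|lra]). nra. }
    split; [|split].
    + unfold theta1, A1. rewrite HX. unfold m. field. split; lra.
    + exact Ht2.
    + rewrite Ht2. unfold theta3, theta1. rewrite Hln, HX. unfold A1, A2, B2, C2, m. field. repeat split; try lra.
      assert (0 < p*q*(1-X)) by (apply Rmult_lt_0_compat; [nra|lra]). nra.
Qed.
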